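(* Consider Algorithm ProxSVRG (described in the context) with minibatch size $b\le n$, epoch length $m\ge 1$, a number of inner iterations $T$ that is a multiple of $m$, and step size $\eta=\rho/L$, where $0<\rho<1/2$ satisfies $$\frac{4\rho^2 m^2}{b}+\rho\le 1 .$$ Then the output $x_a$ of the algorithm satisfies $$\mathbb E\big[\|\mathcal G_\eta(x_a)\|^2\big]\le \frac{2L\,(F(x^0)-F(x^* ))}{\rho(1-2\rho)\,T},$$ where $x^*$ is an optimal solution of $\min_x F(x)$.
   Context: Setting: Let $n,d\ge 1$ be integers and $[n]=\{1,\dots,n\}$. Let $f_1,\dots,f_n:\mathbb R^d\to\mathbb R$ be differentiable (possibly nonconvex) functions, each $L$-smooth for some $L>0$, i.e. $\|\nabla f_i(x)-\nabla f_i(y)\|\le L\|x-y\|$ for all $x,y\in\mathbb R^d$ and $i\in[n]$. Let $f=\frac1n\sum_{i=1}^n f_i$. Let $h:\mathbb R^d\to\mathbb R\cup\{+\infty\}$ be proper, lower semicontinuous and convex, with closed domain. Let $F=f+h$, and let $x^*$ be a global minimizer of $F$ on $\mathbb R^d$ (assumed to exist). For $\eta>0$, $\mathrm{prox}_{\eta h}(x):=\arg\min_{y\in\mathbb R^d}\big(h(y)+\frac1{2\eta}\|y-x\|^2\big)$, and the gradient mapping is $\mathcal G_\eta(x):=\frac1\eta\big[x-\mathrm{prox}_{\eta h}(x-\eta\nabla f(x))\big]$. Algorithm ProxSVRG$(x^0,T,m,b,\eta)$: Given $x^0\in\mathbb R^d$, positive integers $T,m,b$ and $\eta>0$, let $S=\lceil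 T/m\rceil$ and set $\tilde x^0=x^0_m=x^0$. For $s=0,\dots,S-1$: set $x^{s+1}_0=x^s_m$ and $g^{s+1}=\frac1n\sum_{i=1}^n\nabla f_i(\tilde x^s)$; for $t=0,\dots,m-1$: draw a multiset $I_t$ of $b$ indices, each drawn independently and uniformly at random from $[n]$ (with replacement, independently of all previous draws), set $v^{s+1}_t=\frac1b\sum_{i\in I_t}\big(\nabla f_i(x^{s+1}_t)-\nabla f_i(\tilde x^s)\big)+g^{s+1}$ and $x^{s+1}_{t+1}=\mathrm{prox}_{\eta h}(x^{s+1}_t-\eta v^{s+1}_t)$; after the inner loop set $\tilde x^{s+1}=x^{s+1}_m$. The output $x_a$ is chosen uniformly at random from $\{x^{s+1}_t: 0\le t\le m-1,\ 0\le s\le S-1\}$. Expectations are over all randomness of the algorithm. *)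

(* Defs.v *)
From Stdlib Require Import Reals List.
From mathcomp Require Import ssreflect ssrbool ssrfun eqtype ssrnat seq fintype.
Open Scope R_scope.

Definition Vec (d : nat) := 'I_d -> R.

Definition sumI (d : nat) (F : 'I_d -> R) : R :=
  List.fold_right Rplus 0 (List.map F (enum 'I_d)).

Definition vadd {d} (x y : Vec d) : Vec d := fun i => x i + y i.
Definition vsub {d} (x y : Vec d) : Vec d := fun i => x i - y i.
Definition vscale {d} (a : R) (x : Vec d) : Vec d := fun i => a * x i.
Definition vzero {d} : Vec d := fun _ => 0.
Definition dot {d} (x y : Vec d) : R := sumI d (fun i => x i * y i).
Definition norm {d} (x : Vec d) : R := sqrt (dot x x).

(* sum over k = 0 .. N-1 (exactly N terms) *)
Fixpoint sumN (N : nat) (F : nat -> R) : R :=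
  match N with O => 0 | S k => sumN k F + F k end.

Definition is_gradient {d} (f : Vec d -> R) (g : Vec d -> Vec d) : Prop :=
  forall x eps, 0 < eps -> exists delta, 0 < delta /\
    forall hv : Vec d, norm hv < delta ->
      Rabs (f (vadd x hv) - f x - dot (g x) hv) <= eps * norm hv.

Definition lipschitz_grad {d} (L : R) (g : Vec d -> Vec d) : Prop :=
  forall x y, norm (vsub (g x) (g y)) <= L * norm (vsub x y).

(* ---------- extended-valued h : R^d -> R U {+oo}  (None = +oo) ---------- *)
Definition proper_fn {d} (h : Vec d -> option R) : Prop := exists x, h x <> None.

Definition ext_gt (c : R) (v : option R) : Prop :=
  match v with None => True | Some a => c < a end.

Definition lsc_fn {d} (h : Vec d -> option R) : Prop :=
  forall x c, ext_gt c (h x) -> exists delta, 0 < delta /\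
    forall y, norm (vsub y x) < delta -> ext_gt c (h y).

Definition convex_fn {d} (h : Vec d -> option R) : Prop :=
  forall x y a b t, 0 <= t <= 1 -> h x = Some a -> h y = Some b ->
    exists v, h (vadd (vscale t x) (vscale (1 - t) y)) = Some v /\
              v <= t * a + (1 - t) * b.

Definition closed_dom {d} (h : Vec d -> option R) : Prop :=
  forall x, (forall eps, 0 < eps -> exists y, h y <> None /\ norm (vsub y x) < eps) ->
    h x <> None.

Definition is_prox {d} (h : Vec d -> option R) (eta : R) (p : Vec d -> Vec d) : Prop :=
  forall x, exists hp, h (p x) = Some hp /\
    forall y v, h y = Some v ->
      hp + (norm (vsub (p x) x))^2 / (2 * eta) <= v + (norm (vsub y x))^2 / (2 * eta).

Definition favg {d} (n : nat) (fs : nat -> Vec d -> R) (x : Vec d) : R :=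
  / INR n * sumN n (fun i => fs i x).

Definition gavg {d} (n : nat) (gs : nat -> Vec d -> Vec d) (x : Vec d) : Vec d :=
  fun j => / INR n * sumN n (fun i => gs i x j).

Definition grad_map {d} (n : nat) (gs : nat -> Vec d -> Vec d) (p : Vec d -> Vec d)
  (eta : R) (x : Vec d) : Vec d :=
  vscale (/ eta) (vsub x (p (vsub x (vscale eta (gavg n gs x))))).

(* one inner step with minibatch I (a list of indices in [0,n), with repetition) *)
Definition svrg_step {d} (n b : nat) (gs : nat -> Vec d -> Vec d) (p : Vec d -> Vec d)
  (eta : R) (xt xtl gfull : Vec d) (batch : list nat) : Vec d :=
  let v : Vec d := fun j =>
    / INR b * List.fold_right Rplus 0 (List.map (fun i => gs i xt j - gs i xtl j) batch)
    + gfull j in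
  p (vsub xt (vscale eta v)).

(* inner loop: returns the iterates x_0,...,x_{m-1} and x_m *)
Fixpoint inner_run {d} (n b : nat) (gs : nat -> Vec d -> Vec d) (p : Vec d -> Vec d)
  (eta : R) (xt xtl gfull : Vec d) (bs : list (list nat)) : list (Vec d) * Vec d :=
  match bs with
  | nil => (nil, xt)
  | batch :: bs' =>
      let r := inner_run n b gs p eta (svrg_step n b gs p eta xt xtl gfull batch) xtl gfull bs' in
      (xt :: fst r, snd r)
  end.

(* outer loop: returns all iterates x^{s+1}_t, 0<=s<S, 0<=t<m *)
Fixpoint outer_run {d} (n b : nat) (gs : nat -> Vec d -> Vec d) (p : Vec d -> Vec d)
  (eta : R) (xtl : Vec d) (es : list (list (list nat))) : list (Vec d) :=
  match es with
  | nil => nil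
  | e :: es' =>
      let r := inner_run n b gs p eta xtl xtl (gavg n gs xtl) e in
      fst r ++ outer_run n b gs p eta (snd r) es'
  end.

Fixpoint chunk {A} (k c : nat) (l : list A) : list (list A) :=
  match c with
  | O => nil
  | S c' => List.firstn k l :: chunk k c' (List.skipn k l)
  end.

(* expectation of Phi over a list of N indices drawn i.i.d. uniformly from {0,...,n-1} *)
Fixpoint avg_draws (n N : nat) (Phi : list nat -> R) : R :=
  match N with
  | O => Phi nil
  | S k => / INR n * sumN n (fun i => avg_draws n k (fun l => Phi (i :: l)))
  end.

Definition num_epochs (T m : nat) : nat := Nat.div (T + m - 1) m.

(* E || G_eta(x_a) ||^2, x_a uniform among the S*m iterates x^{s+1}_t *)
Definition expected_sq_gradmap {d} (n b m T : nat) (gs : nat -> Vec d -> Vec d)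
  (p : Vec d -> Vec d) (eta : R) (x0 : Vec d) : R :=
  let Sn := num_epochs T m in
  avg_draws n (Sn * m * b) (fun l =>
    let iters := outer_run n b gs p eta x0 (chunk m Sn (chunk b (Sn * m) l)) in
    / INR (Sn * m) *
      List.fold_right Rplus 0
        (List.map (fun x => (norm (grad_map n gs p eta x))^2) iters)).

(* Main.v *)
Require Import Defs.
From Stdlib Require Import Reals List Lra Lia FunctionalExtensionality.
From mathcomp Require Import ssreflect ssrbool ssrfun eqtype ssrnat seq fintype.
Open Scope R_scope.

Definition lsumR {A} (F : A -> R) (s : list A) : R := List.fold_right Rplus 0 (List.map F s).

Lemma lsumR_plus {A} (F G : A -> R) s : lsumR (fun i => F i + G i) s = lsumR F s + lsumR G s.
Proof. induction s as [|a s IH]; unfold lsumR in *; simpl; [lra|]. rewrite IH; lra. Qed.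
Lemma lsumR_scal {A} (c : R) (F : A -> R) s : lsumR (fun i => c * F i) s = c * lsumR F s.
Proof. induction s as [|a s IH]; unfold lsumR in *; simpl; [lra|]. rewrite IH; lra. Qed.
Lemma lsumR_ext {A} (F G : A -> R) s : (forall i, F i = G i) -> lsumR F s = lsumR G s.
Proof. intro H. induction s as [|a s IH]; unfold lsumR in *; simpl; [lra|]. rewrite IH H; lra. Qed.
Lemma lsumR_le {A} (F G : A -> R) s : (forall i, F i <= G i) -> lsumR F s <= lsumR G s.
Proof. intro H. induction s as [|a s IH]; unfold lsumR in *; simpl; [lra|]. specialize (H a); lra. Qed.
Lemma lsumR_zero {A} s : lsumR (fun _ : A => 0) s = 0.
Proof. induction s as [|a s IH]; unfold lsumR in *; simpl; lra. Qed.
Lemma lsumR_const {A} (c : R) (s : list A) : lsumR (fun _ => c) s = INR (length s) * c.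
Proof. induction s as [|a s IH]; unfold lsumR in *; simpl; [lra|]. rewrite IH.
  destruct (length s); simpl; lra. Qed.

Lemma sumI_lsum d (F : 'I_d -> R) : sumI d F = lsumR F (enum 'I_d).
Proof. reflexivity. Qed.
Lemma sumI_plus d (F G : 'I_d -> R) : sumI d (fun i => F i + G i) = sumI d F + sumI d G.
Proof. apply lsumR_plus. Qed.
Lemma sumI_scal d c (F : 'I_d -> R) : sumI d (fun i => c * F i) = c * sumI d F.
Proof. apply lsumR_scal. Qed.
Lemma sumI_ext d (F G : 'I_d -> R) : (forall i, F i = G i) -> sumI d F = sumI d G.
Proof. apply lsumR_ext. Qed.
Lemma sumI_le d (F G : 'I_d -> R) : (forall i, F i <= G i) -> sumI d F <= sumI d G.
Proof. apply lsumR_le. Qed.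
Lemma sumI_zero d : sumI d (fun _ => 0) = 0.
Proof. apply lsumR_zero. Qed.
Lemma sumI_nonneg d (F : 'I_d -> R) : (forall i, 0 <= F i) -> 0 <= sumI d F.
Proof. intro H. rewrite <- (sumI_zero d). apply sumI_le. exact H. Qed.

Lemma sumN_plus N (F G : nat -> R) : sumN N (fun i => F i + G i) = sumN N F + sumN N G.
Proof. induction N; simpl; [lra|]. rewrite IHN; lra. Qed.
Lemma sumN_scal N c (F : nat -> R) : sumN N (fun i => c * F i) = c * sumN N F.
Proof. induction N; simpl; [lra|]. rewrite IHN; lra. Qed.
Lemma sumN_ext N (F G : nat -> R) : (forall i, (i < N)%coq_nat -> F i = G i) -> sumN N F = sumN N G.
Proof. induction N; intro H; simpl; [lra|]. rewrite IHN; [|intros; apply H; lia]. f_equal; apply H; lia. Qed.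
Lemma sumN_le N (F G : nat -> R) : (forall i, (i < N)%coq_nat -> F i <= G i) -> sumN N F <= sumN N G.
Proof. induction N; intro H; simpl; [lra|]. assert (sumN N F <= sumN N G) by (apply IHN; intros; apply H; lia).
  assert (F N <= G N) by (apply H; lia). lra. Qed.
Lemma sumN_const N c : sumN N (fun _ => c) = INR N * c.
Proof. induction N; simpl; [lra|]. rewrite IHN. destruct N; simpl; lra. Qed.
Lemma sumN_sumI N d (F : nat -> 'I_d -> R) :
  sumN N (fun i => sumI d (F i)) = sumI d (fun j => sumN N (fun i => F i j)).
Proof. induction N; simpl. - symmetry; apply sumI_zero.
  - rewrite IHN sumI_plus. reflexivity. Qed.

Definition nsq {d} (u : Vec d) := dot u u.
Lemma dot_comm {d} (u v : Vec d) : dot u v = dot v u.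
Proof. unfold dot; apply sumI_ext; intro; lra. Qed.
Lemma nsq_nonneg {d} (u : Vec d) : 0 <= nsq u.
Proof. unfold nsq, dot. apply sumI_nonneg; intro; nra. Qed.
Lemma norm_sq {d} (u : Vec d) : norm u ^ 2 = nsq u.
Proof. unfold norm. apply pow2_sqrt. apply nsq_nonneg. Qed.
Lemma norm_nonneg {d} (u : Vec d) : 0 <= norm u.
Proof. apply sqrt_pos. Qed.
Lemma sumI_lin3 d c1 c2 c3 (F1 F2 F3 : 'I_d -> R) :
  sumI d (fun j => c1 * F1 j + c2 * F2 j + c3 * F3 j) = c1 * sumI d F1 + c2 * sumI d F2 + c3 * sumI d F3.
Proof. rewrite !sumI_plus !sumI_scal. reflexivity. Qed.

Lemma nsq_lin {d} (w a b : Vec d) c : (forall j, w j = a j + c * b j) ->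
  nsq w = nsq a + 2 * c * dot a b + c ^ 2 * nsq b.
Proof. intro H. unfold nsq, dot. rewrite -(Rmult_1_l (sumI d (fun i => a i * a i))). rewrite -sumI_lin3. apply sumI_ext; intro j. rewrite H. ring. Qed.

Lemma dot_lin {d} (w a b e : Vec d) c : (forall j, w j = a j + c * b j) ->
  dot w e = dot a e + c * dot b e.
Proof. intro H. unfold dot. rewrite -(Rmult_1_l (sumI d (fun i => a i * e i))).
  rewrite -(Rplus_0_r (_ + c * _)) -(Rmult_0_l (sumI d (fun i => a i * e i))).
  rewrite -sumI_lin3. apply sumI_ext; intro j. rewrite H. ring. Qed.

Lemma young {d} (a v : Vec d) c : 0 < c -> 2 * dot a v <= c * nsq a + nsq v / c.
Proof. intro Hc. pose proof (nsq_nonneg (fun j => c * a j - v j)) as H.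
  rewrite (nsq_lin (fun j => c * a j - v j) (fun j => c * a j) v (-1)) in H; [|intro; ring].
  assert (E1 : nsq (fun j => c * a j) = c^2 * nsq a).
  { rewrite (nsq_lin (fun j => c * a j) (fun _ => 0) a c); [|intro; ring].
    unfold nsq, dot. rewrite (sumI_ext _ (fun i => 0 * 0) (fun _ => 0)); [|intro; ring].
    rewrite (sumI_ext _ (fun i => 0 * a i) (fun _ => 0)); [|intro; ring]. rewrite sumI_zero; ring. }
  assert (E2 : dot (fun j => c * a j) v = c * dot a v).
  { rewrite (dot_lin (fun j => c * a j) (fun _ => 0) a v c); [|intro; ring].
    unfold dot. rewrite (sumI_ext _ (fun i => 0 * v i) (fun _ => 0)); [|intro; ring]. rewrite sumI_zero; ring. }
  rewrite E1 E2 in H.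
  apply (Rmult_le_reg_r c); [lra|]. unfold Rdiv. rewrite Rmult_plus_distr_r.
  rewrite (Rmult_assoc (nsq v)) Rinv_l; [|lra]. nra. Qed.

Lemma nsq_scale {d} (v : Vec d) s : nsq (vscale s v) = s ^ 2 * nsq v.
Proof. rewrite (nsq_lin (vscale s v) (fun _ => 0) v s); [|intro; unfold vscale; ring].
  unfold nsq, dot. rewrite (sumI_ext _ (fun i => 0 * 0) (fun _ => 0)); [|intro; ring].
  rewrite (sumI_ext _ (fun i => 0 * v i) (fun _ => 0)); [|intro; ring]. rewrite sumI_zero; ring. Qed.

Lemma norm_scale {d} (v : Vec d) s : norm (vscale s v) = Rabs s * norm v.
Proof. unfold norm. change (sqrt (nsq (vscale s v)) = Rabs s * sqrt (nsq v)).
  rewrite nsq_scale. rewrite sqrt_mult_alt; [|nra]. rewrite -sqrt_Rsqr_abs. unfold Rsqr. f_equal. f_equal. ring. Qed.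

Lemma dot_scale_r {d} (a v : Vec d) s : dot a (vscale s v) = s * dot a v.
Proof. unfold dot. rewrite -sumI_scal. apply sumI_ext; intro; unfold vscale; ring. Qed.

Lemma dot_sub_l {d} (a b v : Vec d) : dot (vsub a b) v = dot a v - dot b v.
Proof. rewrite (dot_lin (vsub a b) a b v (-1)); [|intro; unfold vsub; ring]. ring. Qed.

Lemma grad_line {d} (f : Vec d -> R) (g : Vec d -> Vec d) (x v : Vec d) t :
  is_gradient f g ->
  derivable_pt_lim (fun s => f (vadd x (vscale s v))) t (dot (g (vadd x (vscale t v))) v).
Proof.
  intros Hg eps Heps.
  set z := vadd x (vscale t v).
  set nv := norm v.
  assert (Hnv : 0 <= nv) by apply norm_nonneg.
  destruct (Hg z (eps / (2 * (nv + 1)))) as [delta [Hdel Hd]].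
  { apply Rdiv_lt_0_compat; lra. }
  assert (Hd' : 0 < delta / (nv + 1)) by (apply Rdiv_lt_0_compat; lra).
  exists (mkposreal _ Hd'). intros hh Hh0 Hhd. simpl in Hhd.
  assert (Ez : vadd x (vscale (t + hh) v) = vadd z (vscale hh v)).
  { apply functional_extensionality; intro j. unfold z, vadd, vscale. ring. }
  rewrite Ez.
  assert (Hn : norm (vscale hh v) < delta).
  { rewrite norm_scale. fold nv.
    assert (Habs : 0 < Rabs hh) by (apply Rabs_pos_lt; exact Hh0).
    apply (Rmult_lt_compat_r (nv + 1)) in Hhd; [|lra].
    unfold Rdiv in Hhd. rewrite Rmult_assoc Rinv_l in Hhd; [|lra]. nra. }
  specialize (Hd _ Hn). rewrite dot_scale_r norm_scale in Hd. fold nv in Hd.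
  set D := dot (g z) v in Hd |- *.
  set Df := f (vadd z (vscale hh v)) - f z in Hd.
  assert (Habs : 0 < Rabs hh) by (apply Rabs_pos_lt; exact Hh0).
  replace ((f (vadd z (vscale hh v)) - f z) / hh - D) with ((Df - hh * D) * / hh)
    by (unfold Df; field; exact Hh0).
  rewrite Rabs_mult Rabs_inv.
  apply (Rmult_lt_reg_r (Rabs hh)); [exact Habs|].
  rewrite Rmult_assoc Rinv_l; [|lra]. rewrite Rmult_1_r.
  eapply Rle_lt_trans; [exact Hd|].
  assert (Hq : eps / (2 * (nv + 1)) * nv < eps).
  { apply (Rmult_lt_reg_r (2 * (nv + 1))); [lra|]. unfold Rdiv.
    replace (eps * / (2 * (nv + 1)) * nv * (2 * (nv + 1))) with (eps * nv)
      by (field; lra). nra. }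
  nra.
Qed.
Lemma descent_i {d} (f : Vec d -> R) (g : Vec d -> Vec d) L :
  0 < L -> is_gradient f g -> lipschitz_grad L g ->
  forall x y, f y <= f x + dot (g x) (vsub y x) + L / 2 * nsq (vsub y x).
Proof.
  intros HL Hg Hl x y.
  set v := vsub y x. set D := dot (g x) v. set N := nsq v.
  set psi := (fun s => f (vadd x (vscale s v)) - D * s - (L / 2 * N) * (s * s)).
  set dpsi := (fun s => dot (g (vadd x (vscale s v))) v - D * 1 - (L / 2 * N) * (1 * s + s * 1)).
  assert (Hd : forall s, derivable_pt_lim psi s (dpsi s)).
  { intro s. unfold psi, dpsi.
    change (derivable_pt_lim ((fun s => f (vadd x (vscale s v))) - mult_real_fct D Ranalysis1.id
        - mult_real_fct (L / 2 * N) (Ranalysis1.id * Ranalysis1.id))%F s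
      (dot (g (vadd x (vscale s v))) v - D * 1 - (L / 2 * N) * (1 * Ranalysis1.id s + Ranalysis1.id s * 1))).
    apply derivable_pt_lim_minus; [apply derivable_pt_lim_minus|].
    - apply grad_line. exact Hg.
    - apply derivable_pt_lim_scal. apply derivable_pt_lim_id.
    - apply derivable_pt_lim_scal. apply derivable_pt_lim_mult; apply derivable_pt_lim_id. }
  pose (pr := fun s => exist (fun l => derivable_pt_abs psi s l) (dpsi s) (Hd s) : derivable_pt psi s).
  destruct (MVT_cor1 psi 0 1 pr Rlt_0_1) as [c [Hc Hc01]].
  assert (Hdc : derive_pt psi c (pr c) = dpsi c) by reflexivity.
  rewrite Hdc in Hc.
  assert (E0 : vadd x (vscale 0 v) = x).
  { apply functional_extensionality; intro j; unfold vadd, vscale; ring. }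
  assert (E1 : vadd x (vscale 1 v) = y).
  { apply functional_extensionality; intro j; unfold vadd, vscale, v, vsub; ring. }
  assert (Hneg : dpsi c <= 0).
  { unfold dpsi. set z := vadd x (vscale c v).
    set a := vsub (g z) (g x).
    assert (Ea : dot (g z) v - D = dot a v) by (unfold a, D; rewrite dot_sub_l; ring).
    assert (Hla : norm a <= L * (c * norm v)).
    { unfold a. eapply Rle_trans; [apply Hl|].
      assert (Ez : vsub z x = vscale c v).
      { apply functional_extensionality; intro j; unfold z, vadd, vscale, vsub; ring. }
      rewrite Ez norm_scale Rabs_pos_eq; lra. }
    assert (Hna : nsq a <= L ^ 2 * c ^ 2 * N).
    { rewrite -norm_sq. unfold N. rewrite -norm_sq.
      pose proof (norm_nonneg a). pose proof (norm_nonneg v).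
      assert (0 <= L * (c * norm v)) by (apply Rmult_le_pos; [lra|]; apply Rmult_le_pos; lra).
      nra. }
    assert (HLc : 0 < L * c) by nra.
    pose proof (young a v (/ (L * c)) (Rinv_0_lt_compat _ HLc)) as Hy.
    unfold Rdiv in Hy. rewrite Rinv_inv in Hy. fold N in Hy.
    assert (nsq a * / (L * c) <= L * c * N).
    { apply (Rmult_le_reg_r (L * c)); [lra|]. rewrite Rmult_assoc Rinv_l; [|lra].
      nra. }
    nra. }
  unfold psi in Hc. rewrite E0 E1 in Hc. nra.
Qed.

Lemma favg_gavg_dot {d} n (gs : nat -> Vec d -> Vec d) (x v : Vec d) :
  dot (gavg n gs x) v = / INR n * sumN n (fun i => dot (gs i x) v).
Proof. unfold dot, gavg. rewrite sumN_sumI -sumI_scal. apply sumI_ext; intro j.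
  rewrite -sumN_scal. rewrite Rmult_comm -sumN_scal. rewrite -sumN_scal.
  apply sumN_ext; intros; ring. Qed.

Lemma descent {d} n (fs : nat -> Vec d -> R) gs L :
  (0 < n)%coq_nat -> 0 < L ->
  (forall i, (i < n)%coq_nat -> is_gradient (fs i) (gs i)) ->
  (forall i, (i < n)%coq_nat -> lipschitz_grad L (gs i)) ->
  forall x y, favg n fs y <= favg n fs x + dot (gavg n gs x) (vsub y x) + L / 2 * nsq (vsub y x).
Proof.
  intros Hn HL Hg Hl x y.
  rewrite favg_gavg_dot. unfold favg.
  assert (Hn' : 0 < INR n) by (apply lt_0_INR; exact Hn).
  assert (H : sumN n (fun i => fs i y) <= sumN n (fun i => fs i x + dot (gs i x) (vsub y x) + L / 2 * nsq (vsub y x))).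
  { apply sumN_le; intros i Hi. apply descent_i; auto. }
  rewrite !sumN_plus sumN_const in H.
  apply (Rmult_le_compat_l (/ INR n)) in H; [|left; apply Rinv_0_lt_compat; exact Hn'].
  replace (/ INR n * (INR n * (L / 2 * nsq (vsub y x)))) with (L / 2 * nsq (vsub y x)) in H
    by (field; lra).
  eapply Rle_trans; [exact H|]. right.
  replace (/ INR n * (sumN n (fun i : nat => fs i x) + sumN n (fun i : nat => dot (gs i x) (vsub y x)) +
     INR n * (L / 2 * nsq (vsub y x)))) with
    (/ INR n * sumN n (fun i : nat => fs i x) + / INR n * sumN n (fun i : nat => dot (gs i x) (vsub y x)) +
     L / 2 * nsq (vsub y x)) by (field; lra). reflexivity.
Qed.
Lemma three_point {d} (h : Vec d -> option R) eta p :
  0 < eta -> convex_fn h -> is_prox h eta p ->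
  forall u z hz, h z = Some hz -> exists hp, h (p u) = Some hp /\
    hp + nsq (vsub (p u) u) / (2 * eta) + nsq (vsub z (p u)) / (2 * eta)
    <= hz + nsq (vsub z u) / (2 * eta).
Proof.
  intros Heta Hc Hp u z hz Hz.
  destruct (Hp u) as [hp [Hhp Hmin]]. exists hp. split; [exact Hhp|].
  set y := p u in Hhp Hmin |- *.
  set D := dot (vsub y u) (vsub z y). set N := nsq (vsub z y).
  assert (HN : 0 <= N) by apply nsq_nonneg.
  assert (Ht : forall t, 0 < t <= 1 -> 0 <= hz - hp + D / eta + t * N / (2 * eta)).
  { intros t Ht.
    destruct (Hc z y hz hp t ltac:(lra) Hz Hhp) as [vw [Hw Hvw]].
    specialize (Hmin _ _ Hw). rewrite !norm_sq in Hmin.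
    rewrite (nsq_lin (vsub (vadd (vscale t z) (vscale (1 - t) y)) u) (vsub y u) (vsub z y) t) in Hmin;
      [|intro; unfold vsub, vadd, vscale; ring].
    fold D N in Hmin.
    assert (H1 : t * (hp - hz) <= (2 * t * D + t ^ 2 * N) / (2 * eta)).
    { unfold Rdiv in *. nra. }
    assert (H2 : hp - hz <= (2 * D + t * N) / (2 * eta)).
    { apply (Rmult_le_reg_l t); [lra|]. eapply Rle_trans; [exact H1|]. right. field. lra. }
    unfold Rdiv in *. assert (/ (2 * eta) = / eta * / 2) by (field; lra). nra. }
  assert (HQ : 0 <= hz - hp + D / eta).
  { destruct (Rle_dec 0 (hz - hp + D / eta)) as [Hq|Hq]; [exact Hq|]. exfalso.
    set Q := hz - hp + D / eta in Hq Ht.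
    destruct (Req_dec N 0) as [HN0|HN0].
    - specialize (Ht 1 ltac:(lra)). rewrite HN0 in Ht. unfold Rdiv in Ht. nra.
    - set t := Rmin 1 (- Q * eta / N).
      assert (Ht0 : 0 < t).
      { unfold t. apply Rmin_glb_lt; [lra|]. apply Rdiv_lt_0_compat; nra. }
      assert (Ht1 : t <= 1) by apply Rmin_l.
      assert (Ht2 : t <= - Q * eta / N) by apply Rmin_r.
      specialize (Ht t ltac:(lra)).
      assert (t * N <= - Q * eta).
      { apply (Rmult_le_compat_r N) in Ht2; [|lra]. unfold Rdiv in Ht2.
        rewrite Rmult_assoc Rinv_l in Ht2; lra. }
      assert (t * N / (2 * eta) <= - Q / 2).
      { unfold Rdiv. apply (Rmult_le_reg_r (2 * eta)); [lra|].
        rewrite Rmult_assoc Rinv_l; [|lra]. nra. }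
      lra. }
  rewrite (nsq_lin (vsub z u) (vsub y u) (vsub z y) 1); [|intro; unfold vsub; ring].
  fold D N. unfold Rdiv in *.
  assert (D * / eta = 2 * D * / (2 * eta)) by (field; lra).
  assert (HH : 0 < / (2 * eta)) by (apply Rinv_0_lt_compat; lra).
  nra.
Qed.
Lemma step_det {d} n (fs : nat -> Vec d -> R) gs L (h : Vec d -> option R) eta p :
  (0 < n)%coq_nat -> 0 < L -> 0 < eta ->
  (forall i, (i < n)%coq_nat -> is_gradient (fs i) (gs i)) ->
  (forall i, (i < n)%coq_nat -> lipschitz_grad L (gs i)) ->
  convex_fn h -> is_prox h eta p ->
  forall x hx (v : Vec d), h x = Some hx ->
  exists hy, h (p (vsub x (vscale eta v))) = Some hy /\
    favg n fs (p (vsub x (vscale eta v))) + hy <=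
    favg n fs x + hx + eta / 2 * nsq (vsub (gavg n gs x) v)
    + (L / 2 - / (2 * eta)) * nsq (vsub (p (vsub x (vscale eta v))) x)
    - / (2 * eta) * nsq (vsub (p (vsub x (vscale eta (gavg n gs x)))) x).
Proof.
  intros Hn HL Heta Hg Hl Hc Hp x hx v Hx.
  set g := gavg n gs x.
  set ub := vsub x (vscale eta g). set uv := vsub x (vscale eta v).
  destruct (three_point h eta p Heta Hc Hp ub x hx Hx) as [hb [Hb TP1]].
  set yb := p ub in Hb TP1 |- *.
  destruct (three_point h eta p Heta Hc Hp uv yb hb Hb) as [hy [Hy TP2]].
  set y := p uv in Hy TP2 |- *.
  exists hy. split; [exact Hy|].
  pose proof (descent n fs gs L Hn HL Hg Hl x y) as DL. fold g in DL.
  set A := vsub yb x. set C := vsub y x.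
  set X := / (2 * eta).
  assert (HX : X * (2 * eta) = 1) by (unfold X; field; lra).
  assert (E1 : nsq (vsub yb ub) = nsq A + 2 * eta * dot A g + eta ^ 2 * nsq g).
  { apply nsq_lin. intro; unfold A, ub, vsub, vscale; ring. }
  assert (E2 : nsq (vsub x yb) = nsq A).
  { rewrite (nsq_lin _ A A (-2)); [|intro; unfold A, vsub; ring]. unfold nsq. ring. }
  assert (E3 : nsq (vsub x ub) = eta ^ 2 * nsq g).
  { rewrite (nsq_lin _ g g (eta - 1)); [|intro; unfold ub, vsub, vscale; ring]. unfold nsq. ring. }
  assert (E4 : nsq (vsub y uv) = nsq C + 2 * eta * dot C v + eta ^ 2 * nsq v).
  { apply nsq_lin. intro; unfold C, uv, vsub, vscale; ring. }
  assert (E5 : nsq (vsub yb y) = nsq A + 2 * (-1) * dot A C + (-1) ^ 2 * nsq C).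
  { apply nsq_lin. intro; unfold A, C, vsub; ring. }
  assert (E6 : nsq (vsub yb uv) = nsq A + 2 * eta * dot A v + eta ^ 2 * nsq v).
  { apply nsq_lin. intro; unfold A, uv, vsub, vscale; ring. }
  pose proof (young (vsub g v) (vsub C A) eta Heta) as Y.
  assert (E7 : dot (vsub g v) (vsub C A) = dot C g - dot A g - dot C v + dot A v).
  { rewrite dot_sub_l. rewrite (dot_comm g) (dot_comm v).
    rewrite (dot_lin (vsub C A) C A g (-1)); [|intro; unfold vsub; ring].
    rewrite (dot_lin (vsub C A) C A v (-1)); [|intro; unfold vsub; ring]. ring. }
  assert (E8 : nsq (vsub C A) = nsq C + 2 * (-1) * dot C A + (-1) ^ 2 * nsq A).
  { apply nsq_lin. intro; unfold vsub; ring. }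
  rewrite E7 E8 (dot_comm C A) in Y.
  rewrite E1 E2 E3 in TP1. rewrite E4 E5 E6 in TP2.
  rewrite (dot_comm g C) in DL.
  unfold Rdiv in *. fold X in TP1; fold X in TP2; fold X.
  assert (EY : / eta = 2 * X) by (unfold X; field; lra).
  rewrite EY in Y.
  assert (Heta2 : eta * X = / 2) by (unfold X; field; lra).
  set NA := nsq A in TP1 TP2 DL Y |- *. set NC := nsq C in TP1 TP2 DL Y |- *. set AC := dot A C in TP1 TP2 DL Y |- *.
  set Ag := dot A g in TP1 TP2 DL Y |- *. set Av := dot A v in TP1 TP2 DL Y |- *. set Cg := dot C g in TP1 TP2 DL Y |- *. set Cv := dot C v in TP1 TP2 DL Y |- *.
  set Ng := nsq g in TP1 TP2 DL Y |- *. set Nv := nsq v in TP1 TP2 DL Y |- *. set Ngv := nsq (vsub g v) in TP1 TP2 DL Y |- *.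
  assert (T1 : (NA + 2 * eta * Ag + eta ^ 2 * Ng) * X = NA * X + Ag + eta ^ 2 * Ng * X).
  { transitivity (NA * X + 2 * (eta * X) * Ag + eta ^ 2 * Ng * X); [ring|]. rewrite Heta2. field. }
  assert (T2 : (NC + 2 * eta * Cv + eta ^ 2 * Nv) * X = NC * X + Cv + eta ^ 2 * Nv * X).
  { transitivity (NC * X + 2 * (eta * X) * Cv + eta ^ 2 * Nv * X); [ring|]. rewrite Heta2. field. }
  assert (T3 : (NA + 2 * eta * Av + eta ^ 2 * Nv) * X = NA * X + Av + eta ^ 2 * Nv * X).
  { transitivity (NA * X + 2 * (eta * X) * Av + eta ^ 2 * Nv * X); [ring|]. rewrite Heta2. field. }
  rewrite T1 in TP1. rewrite T2 T3 in TP2.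
  lra.
Qed.
Section Avg.
Variable n : nat.
Hypothesis Hn : (0 < n)%coq_nat.

Lemma INRn_pos : 0 < INR n.
Proof. apply lt_0_INR; exact Hn. Qed.

Lemma avg_le N (Phi Psi : list nat -> R) :
  (forall l, length l = N -> Phi l <= Psi l) -> avg_draws n N Phi <= avg_draws n N Psi.
Proof.
  revert Phi Psi; induction N as [|N IH]; intros Phi Psi H; simpl.
  - apply H; reflexivity.
  - apply Rmult_le_compat_l; [left; apply Rinv_0_lt_compat, INRn_pos|].
    apply sumN_le; intros i _. apply IH. intros l Hl. apply H. simpl; rewrite Hl; reflexivity.
Qed.

Lemma avg_eq N (Phi Psi : list nat -> R) :
  (forall l, length l = N -> Phi l = Psi l) -> avg_draws n N Phi = avg_draws n N Psi.
Proof. intro H. apply Rle_antisym; apply avg_le; intros l Hl; rewrite H; auto; lra. Qed.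

Lemma avg_plus N (Phi Psi : list nat -> R) :
  avg_draws n N (fun l => Phi l + Psi l) = avg_draws n N Phi + avg_draws n N Psi.
Proof.
  revert Phi Psi; induction N as [|N IH]; intros Phi Psi; simpl; [reflexivity|].
  rewrite -Rmult_plus_distr_l -sumN_plus. f_equal. apply sumN_ext; intros; apply IH.
Qed.

Lemma avg_scal N c (Phi : list nat -> R) :
  avg_draws n N (fun l => c * Phi l) = c * avg_draws n N Phi.
Proof.
  revert Phi; induction N as [|N IH]; intros Phi; simpl; [reflexivity|].
  rewrite (sumN_ext _ _ (fun i => c * avg_draws n N (fun l => Phi (i :: l)))); [|intros; apply IH].
  rewrite sumN_scal. ring.
Qed.

Lemma avg_const N c : avg_draws n N (fun _ => c) = c.
Proof.
  induction N as [|N IH]; simpl; [reflexivity|].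
  rewrite (sumN_ext _ _ (fun _ => c)); [|intros; apply IH]. rewrite sumN_const.
  field. apply Rgt_not_eq, INRn_pos.
Qed.

Lemma avg_app a b (Phi : list nat -> R) :
  avg_draws n (a + b)%coq_nat Phi = avg_draws n a (fun l1 => avg_draws n b (fun l2 => Phi (l1 ++ l2)%list)).
Proof.
  revert Phi; induction a as [|a IH]; intros Phi; simpl; [reflexivity|].
  f_equal. apply sumN_ext; intros i _. apply IH.
Qed.

Lemma avg_lsum {A} (s : list A) N (F : list nat -> A -> R) :
  avg_draws n N (fun l => lsumR (F l) s) = lsumR (fun j => avg_draws n N (fun l => F l j)) s.
Proof.
  induction s as [|a s IH]; unfold lsumR in *; simpl.
  - apply avg_const.
  - rewrite avg_plus IH. reflexivity.
Qed.

Lemma avg_sumI d N (F : list nat -> 'I_d -> R) :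
  avg_draws n N (fun l => sumI d (F l)) = sumI d (fun j => avg_draws n N (fun l => F l j)).
Proof. apply avg_lsum. Qed.

Lemma var_scalar (zeta : nat -> R) :
  / INR n * sumN n zeta = 0 ->
  forall N w, avg_draws n N (fun I => (w + lsumR zeta I) ^ 2)
    = w ^ 2 + INR N * (/ INR n * sumN n (fun i => zeta i ^ 2)).
Proof.
  intros Hmu N. induction N as [|N IH]; intro w; simpl.
  - unfold lsumR; simpl. ring.
  - rewrite (sumN_ext _ _ (fun i => (w + zeta i) ^ 2 + INR N * (/ INR n * sumN n (fun i => zeta i ^ 2)))).
    2:{ intros i _. rewrite -IH. apply avg_eq. intros l _. unfold lsumR; simpl. ring. }
    rewrite (sumN_ext _ _ (fun i => (w ^ 2 + INR N * (/ INR n * sumN n (fun i => zeta i ^ 2)))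
                                   + (2 * w * zeta i + zeta i ^ 2))); [|intros; ring].
    rewrite sumN_plus sumN_const sumN_plus sumN_scal.
    assert (Hn' := INRn_pos).
    replace (/ INR n * (INR n * (w ^ 2 + INR N * (/ INR n * sumN n (fun i : nat => zeta i ^ 2))) +
     (2 * w * sumN n zeta + sumN n (fun i : nat => zeta i ^ 2))))
      with (w ^ 2 + INR N * (/ INR n * sumN n (fun i : nat => zeta i ^ 2)) + 2 * w * (/ INR n * sumN n zeta)
            + / INR n * sumN n (fun i : nat => zeta i ^ 2)) by (field; lra).
    rewrite Hmu. destruct N; simpl; ring.
Qed.
End Avg.
Lemma lip_nsq {d} L (g : Vec d -> Vec d) x w : 0 < L -> lipschitz_grad L g ->
  nsq (vsub (g x) (g w)) <= L ^ 2 * nsq (vsub x w).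
Proof. intros HL Hl. rewrite -!norm_sq. pose proof (Hl x w).
  pose proof (norm_nonneg (vsub (g x) (g w))). pose proof (norm_nonneg (vsub x w)). nra. Qed.

Lemma variance {d} n b (gs : nat -> Vec d -> Vec d) L (x w : Vec d) :
  (0 < n)%coq_nat -> (0 < b)%coq_nat -> 0 < L ->
  (forall i, (i < n)%coq_nat -> lipschitz_grad L (gs i)) ->
  avg_draws n b (fun I => nsq (vsub (gavg n gs x)
     (fun j => / INR b * List.fold_right Rplus 0 (List.map (fun i => gs i x j - gs i w j) I) + gavg n gs w j)))
  <= / INR b * L ^ 2 * nsq (vsub x w).
Proof.
  intros Hn Hb HL Hl.
  assert (Hn' : 0 < INR n) by (apply lt_0_INR; exact Hn).
  assert (Hb' : 0 < INR b) by (apply lt_0_INR; exact Hb).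
  set a := fun (j : 'I_d) i => gs i x j - gs i w j.
  set abar := fun j => gavg n gs x j - gavg n gs w j.
  assert (Habar : forall j, abar j = / INR n * sumN n (a j)).
  { intro j. unfold abar, a, gavg. rewrite -Rmult_minus_distr_l. f_equal.
    rewrite (sumN_ext n (fun i => gs i x j - gs i w j) (fun i => gs i x j + (-1) * gs i w j)); [|intros; ring].
    rewrite sumN_plus sumN_scal. ring. }
  set zeta := fun j i => a j i - abar j.
  rewrite (avg_eq n Hn b _ (fun I => sumI d (fun j => / INR b ^ 2 * (0 + lsumR (zeta j) I) ^ 2))).
  2:{ intros I HI. unfold nsq, dot. apply sumI_ext; intro j.
      assert (Hz : lsumR (zeta j) I = lsumR (a j) I - INR b * abar j).
      { unfold zeta. rewrite (lsumR_ext _ (fun i => a j i + (-1) * abar j)); [|intros; ring].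
        rewrite lsumR_plus lsumR_const HI. ring. }
      rewrite Hz. replace (lsumR (a j) I) with (List.fold_right Rplus 0 (List.map (fun i => gs i x j - gs i w j) I)) by reflexivity.
      unfold vsub. replace (gavg n gs x j) with (abar j + gavg n gs w j) by (unfold abar; ring).
      field. lra. }
  rewrite avg_sumI; [|exact Hn].
  assert (Hmu : forall j, / INR n * sumN n (zeta j) = 0).
  { intro j. unfold zeta. rewrite (sumN_ext n _ (fun i => a j i + (-1) * abar j)); [|intros; ring].
    rewrite sumN_plus sumN_const. rewrite Rmult_plus_distr_l -Habar. field. lra. }
  rewrite (sumI_ext _ _ (fun j => / INR b * (/ INR n * sumN n (fun i => zeta j i ^ 2)))).
  2:{ intro j. rewrite avg_scal. rewrite var_scalar; auto. field. lra. }
  assert (Hvar : forall j, / INR n * sumN n (fun i => zeta j i ^ 2) <= / INR n * sumN n (fun i => a j i ^ 2)).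
  { intro j. unfold zeta.
    rewrite (sumN_ext n _ (fun i => a j i ^ 2 + ((-2 * abar j) * a j i + abar j ^ 2))); [|intros; ring].
    rewrite sumN_plus sumN_plus sumN_scal sumN_const.
    replace (/ INR n * (sumN n (fun i : nat => a j i ^ 2) + (-2 * abar j * sumN n (a j) + INR n * abar j ^ 2)))
      with (/ INR n * sumN n (fun i : nat => a j i ^ 2) - 2 * abar j * (/ INR n * sumN n (a j)) + abar j ^ 2)
      by (field; lra).
    rewrite -Habar. nra. }
  eapply Rle_trans.
  { apply sumI_le. intro j. apply Rmult_le_compat_l; [left; apply Rinv_0_lt_compat; lra|]. apply Hvar. }
  rewrite sumI_scal.
  rewrite sumI_scal -sumN_sumI.
  assert (Hs : sumN n (fun i => sumI d (fun j => a j i ^ 2)) <= sumN n (fun _ => L ^ 2 * nsq (vsub x w))).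
  { apply sumN_le; intros i Hi. eapply Rle_trans; [|apply (lip_nsq L (gs i) x w HL (Hl i Hi))].
    right. unfold nsq, dot, vsub, a. apply sumI_ext; intro; ring. }
  rewrite sumN_const in Hs.
  assert (0 < / INR b) by (apply Rinv_0_lt_compat; lra).
  assert (0 < / INR n) by (apply Rinv_0_lt_compat; lra).
  apply (Rmult_le_compat_l (/ INR n)) in Hs; [|lra].
  replace (/ INR n * (INR n * (L ^ 2 * nsq (vsub x w)))) with (L ^ 2 * nsq (vsub x w)) in Hs by (field; lra).
  apply (Rmult_le_compat_l (/ INR b)) in Hs; [|lra]. lra.
Qed.
Definition hval {d} (h : Vec d -> option R) (z : Vec d) : R :=
  match h z with Some a => a | None => 0 end.

Lemma coef_bound (rho L B M Kn : R) :
  0 < rho -> rho < 1/2 -> 0 < L -> 0 < B -> 1 <= M -> 0 <= Kn -> Kn <= M - 1 ->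
  4 * rho ^ 2 * M ^ 2 / B + rho <= 1 ->
  rho * L / B * Kn * (1 + 2 * M) <= L / (2 * rho) - L / 2.
Proof.
  intros H0 H1 HL HB HM HK HKM Hr.
  assert (Hr' : 4 * rho ^ 2 * M ^ 2 <= B * (1 - rho)).
  { apply (Rmult_le_compat_r B) in Hr; [|lra].
    replace ((4 * rho ^ 2 * M ^ 2 / B + rho) * B) with (4 * rho ^ 2 * M ^ 2 + rho * B) in Hr by (field; lra). lra. }
  assert (HK2 : Kn * (1 + 2 * M) <= 2 * M ^ 2) by nra.
  apply (Rmult_le_reg_r (2 * rho * B)); [nra|].
  replace (rho * L / B * Kn * (1 + 2 * M) * (2 * rho * B)) with (2 * rho ^ 2 * L * (Kn * (1 + 2 * M))) by (field; lra).
  replace ((L / (2 * rho) - L / 2) * (2 * rho * B)) with (L * (B * (1 - rho))) by (field; lra).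
  assert (0 <= rho ^ 2) by nra.
  apply Rle_trans with (2 * rho ^ 2 * L * (2 * M ^ 2)).
  - apply Rmult_le_compat_l; [nra|exact HK2].
  - nra.
Qed.

Lemma prox_dom {d} (h : Vec d -> option R) eta p u : is_prox h eta p -> h (p u) = Some (hval h (p u)).
Proof. intro Hp. destruct (Hp u) as [hp [H _]]. unfold hval. rewrite H. reflexivity. Qed.
Lemma one_step {d} n (fs : nat -> Vec d -> R) gs L (h : Vec d -> option R) p m b rho :
  (0 < n)%coq_nat -> 0 < L ->
  (forall i, (i < n)%coq_nat -> is_gradient (fs i) (gs i)) ->
  (forall i, (i < n)%coq_nat -> lipschitz_grad L (gs i)) ->
  convex_fn h -> is_prox h (rho / L) p ->
  (1 <= b)%coq_nat -> (1 <= m)%coq_nat -> 0 < rho -> rho < 1 / 2 ->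
  4 * rho ^ 2 * (INR m) ^ 2 / INR b + rho <= 1 ->
  forall (x w : Vec d) hx k, h x = Some hx -> (k < m)%coq_nat ->
  rho * (1 - 2 * rho) / (2 * L) * nsq (grad_map n gs p (rho / L) x) +
  avg_draws n b (fun I =>
     favg n fs (svrg_step n b gs p (rho / L) x w (gavg n gs w) I)
     + hval h (svrg_step n b gs p (rho / L) x w (gavg n gs w) I)
     + rho * L / INR b * INR k * nsq (vsub (svrg_step n b gs p (rho / L) x w (gavg n gs w) I) w))
  <= favg n fs x + hx + rho * L / INR b * INR (S k) * nsq (vsub x w).
Proof.
  intros Hn HL Hg Hl Hc Hp Hb Hm H0 H1 Hr x w hx k Hx Hk.
  set eta := rho / L.
  assert (Heta : 0 < eta) by (unfold eta; apply Rdiv_lt_0_compat; lra).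
  assert (Hb' : 0 < INR b) by (apply lt_0_INR; lia).
  assert (HM : 1 <= INR m) by (apply (le_INR 1); lia).
  assert (HK : 0 <= INR k) by apply pos_INR.
  assert (HKM : INR k <= INR m - 1).
  { assert (INR (S k) <= INR m) by (apply le_INR; lia). rewrite S_INR in H. lra. }
  set K := rho * L / INR b * INR k.
  assert (HK0 : 0 <= K) by (unfold K; apply Rmult_le_pos; [|lra]; unfold Rdiv; apply Rmult_le_pos; [nra|left; apply Rinv_0_lt_compat; lra]).
  assert (Hcoef : K * (1 + 2 * INR m) <= L / (2 * rho) - L / 2)
    by (unfold K; apply coef_bound; auto; lra).
  set g := gavg n gs x.
  set yb := p (vsub x (vscale eta g)).
  set X := / (2 * eta).
  assert (HX : X = L / (2 * rho)) by (unfold X, eta; field; lra).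
  set NE := nsq (vsub x w). set NA := nsq (vsub yb x).
  assert (HNE : 0 <= NE) by apply nsq_nonneg.
  assert (HNA : 0 <= NA) by apply nsq_nonneg.
  set vI := fun (I : list nat) (j : 'I_d) =>
     / INR b * List.fold_right Rplus 0 (List.map (fun i => gs i x j - gs i w j) I) + gavg n gs w j.
  set c1 := K * (1 + / (2 * INR m)).
  assert (Hpt : forall I, length I = b ->
     favg n fs (svrg_step n b gs p eta x w (gavg n gs w) I)
     + hval h (svrg_step n b gs p eta x w (gavg n gs w) I)
     + K * nsq (vsub (svrg_step n b gs p eta x w (gavg n gs w) I) w)
     <= (favg n fs x + hx - X * NA + c1 * NE) + eta / 2 * nsq (vsub g (vI I))).
  { intros I _.
    change (svrg_step n b gs p eta x w (gavg n gs w) I) with (p (vsub x (vscale eta (vI I)))).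
    destruct (step_det n fs gs L h eta p Hn HL Heta Hg Hl Hc Hp x hx (vI I) Hx) as [hy [Hy SD]].
    set y := p (vsub x (vscale eta (vI I))) in Hy SD |- *.
    fold g yb X in SD. fold NA in SD.
    unfold hval. rewrite Hy.
    set C := vsub y x. set NC := nsq C.
    assert (HNC : 0 <= NC) by apply nsq_nonneg.
    assert (Eyw : nsq (vsub y w) = NC + 2 * 1 * dot C (vsub x w) + 1 ^ 2 * NE).
    { apply nsq_lin. intro; unfold C, vsub; ring. }
    assert (HM2 : 0 < 2 * INR m) by lra.
    pose proof (young C (vsub x w) (2 * INR m) HM2) as Y. fold NC NE in Y.
    assert (Hyw : nsq (vsub y w) <= (1 + 2 * INR m) * NC + (1 + / (2 * INR m)) * NE).
    { rewrite Eyw. unfold Rdiv in Y. lra. }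
    assert (Hneg : (L / 2 - X + K * (1 + 2 * INR m)) * NC <= 0).
    { assert (L / 2 - X + K * (1 + 2 * INR m) <= 0) by (rewrite HX; lra). nra. }
    unfold c1.
    assert (K * nsq (vsub y w) <= K * ((1 + 2 * INR m) * NC + (1 + / (2 * INR m)) * NE))
      by (apply Rmult_le_compat_l; auto).
    fold C in SD. fold NC in SD. nra. }
  eapply Rle_trans.
  { apply Rplus_le_compat_l. apply (avg_le n Hn b _ _ Hpt). }
  rewrite avg_plus avg_const; [|exact Hn]. rewrite avg_scal.
  pose proof (variance n b gs L x w Hn ltac:(lia) HL Hl) as V.
  fold g in V. fold NE in V.
  change (avg_draws n b (fun I => nsq (vsub g (vI I))) <= / INR b * L ^ 2 * NE) in V.
  assert (EG : nsq (grad_map n gs p eta x) = (/ eta) ^ 2 * NA).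
  { unfold grad_map. rewrite nsq_scale. fold g yb. f_equal.
    unfold NA. rewrite (nsq_lin (vsub x yb) (vsub yb x) (vsub yb x) (-2)); [|intro; unfold vsub; ring].
    unfold nsq. ring. }
  rewrite EG.
  assert (Hk1 : rho * (1 - 2 * rho) / (2 * L) * (/ eta) ^ 2 <= X).
  { rewrite HX. unfold eta. replace (rho * (1 - 2 * rho) / (2 * L) * (/ (rho / L)) ^ 2) with
      (L / (2 * rho) - L) by (field; lra). lra. }
  assert (Hv : eta / 2 * avg_draws n b (fun I => nsq (vsub g (vI I))) <= eta / 2 * (/ INR b * L ^ 2 * NE))
    by (apply Rmult_le_compat_l; lra).
  assert (Ec : eta / 2 * (/ INR b * L ^ 2 * NE) = rho * L / INR b / 2 * NE) by (unfold eta; field; lra).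
  assert (Hc1 : c1 + rho * L / INR b / 2 <= rho * L / INR b * INR (S k)).
  { unfold c1, K. rewrite S_INR.
    assert (INR k * / (2 * INR m) <= / 2).
    { apply (Rmult_le_reg_r (2 * INR m)); [lra|]. rewrite Rmult_assoc Rinv_l; lra. }
    assert (0 <= rho * L / INR b) by (unfold Rdiv; apply Rmult_le_pos; [nra|left; apply Rinv_0_lt_compat; lra]).
    nra. }
  assert (HA : rho * (1 - 2 * rho) / (2 * L) * ((/ eta) ^ 2 * NA) <= X * NA).
  { rewrite -Rmult_assoc. apply Rmult_le_compat_r; auto. }
  assert ((c1 + rho * L / INR b / 2) * NE <= rho * L / INR b * INR (S k) * NE)
    by (apply Rmult_le_compat_r; auto).
  lra.
Qed.
Lemma firstn_app_len {A} (l1 l2 : list A) k : length l1 = k -> List.firstn k (l1 ++ l2)%list = l1.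
Proof. revert k; induction l1 as [|a l1 IH]; intros k Hk; simpl in *; subst; simpl; [reflexivity|].
  rewrite IH; reflexivity. Qed.
Lemma skipn_app_len {A} (l1 l2 : list A) k : length l1 = k -> List.skipn k (l1 ++ l2)%list = l2.
Proof. revert k; induction l1 as [|a l1 IH]; intros k Hk; simpl in *; subst; simpl; [reflexivity|].
  apply IH; reflexivity. Qed.
Lemma chunk_cons {A} b k (l1 l2 : list A) : length l1 = b -> chunk b (S k) (l1 ++ l2)%list = l1 :: chunk b k l2.
Proof. intro H. simpl. rewrite firstn_app_len; auto. rewrite skipn_app_len; auto. Qed.
Lemma chunk_length {A} b k (l : list A) : length (chunk b k l) = k.
Proof. revert l; induction k; intro l; simpl; auto. Qed.
Lemma chunk_app {A} b k1 k2 (l1 l2 : list A) : length l1 = (k1 * b)%coq_nat ->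
  chunk b (k1 + k2)%coq_nat (l1 ++ l2)%list = (chunk b k1 l1 ++ chunk b k2 l2)%list.
Proof.
  revert l1; induction k1 as [|k1 IH]; intros l1 H.
  - destruct l1; [reflexivity|simpl in H; discriminate].
  - simpl in H. simpl.
    assert (Hl : length (List.firstn b l1) = b) by (rewrite List.firstn_length; lia).
    replace (l1 ++ l2)%list with (List.firstn b l1 ++ (List.skipn b l1 ++ l2))%list
      by (rewrite List.app_assoc List.firstn_skipn; reflexivity).
    rewrite (firstn_app_len (List.firstn b l1)); auto. rewrite (skipn_app_len (List.firstn b l1)); auto.
    rewrite IH; [reflexivity|]. rewrite List.length_skipn; lia.
Qed.
Lemma lsumR_app {A} (F : A -> R) l1 l2 : lsumR F (l1 ++ l2)%list = lsumR F l1 + lsumR F l2.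
Proof. induction l1 as [|a l1 IH]; unfold lsumR in *; simpl; [lra|]. rewrite IH; lra. Qed.
Definition gsum {d} n (gs : nat -> Vec d -> Vec d) p eta (l : list (Vec d)) : R :=
  lsumR (fun y => (norm (grad_map n gs p eta y)) ^ 2) l.

Lemma inner_lemma {d} n (fs : nat -> Vec d -> R) gs L (h : Vec d -> option R) p m b rho :
  (0 < n)%coq_nat -> 0 < L ->
  (forall i, (i < n)%coq_nat -> is_gradient (fs i) (gs i)) ->
  (forall i, (i < n)%coq_nat -> lipschitz_grad L (gs i)) ->
  convex_fn h -> is_prox h (rho / L) p ->
  (1 <= b)%coq_nat -> (1 <= m)%coq_nat -> 0 < rho -> rho < 1 / 2 ->
  4 * rho ^ 2 * (INR m) ^ 2 / INR b + rho <= 1 ->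
  forall (w : Vec d) (C : Vec d -> R) Kc,
  (forall z, h z = Some (hval h z) -> C z <= favg n fs z + hval h z + Kc) ->
  forall k (x : Vec d), (k <= m)%coq_nat -> h x = Some (hval h x) ->
  avg_draws n (k * b)%coq_nat (fun l =>
    let r := inner_run n b gs p (rho / L) x w (gavg n gs w) (chunk b k l) in
    rho * (1 - 2 * rho) / (2 * L) * gsum n gs p (rho / L) (fst r) + C (snd r))
  <= favg n fs x + hval h x + rho * L / INR b * INR k * nsq (vsub x w) + Kc.
Proof.
  intros Hn HL Hg Hl Hc Hp Hb Hm H0 H1 Hr w C Kc HC k.
  set kap := rho * (1 - 2 * rho) / (2 * L).
  induction k as [|k IH]; intros x Hk Hx.
  - simpl. unfold gsum, lsumR; simpl.
    specialize (HC x Hx). simpl in HC. lra.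
  - change (S k * b)%coq_nat with (b + k * b)%coq_nat.
    rewrite avg_app.
    set step := fun I => svrg_step n b gs p (rho / L) x w (gavg n gs w) I.
    eapply Rle_trans.
    { apply (avg_le n Hn b _ (fun l1 => kap * (norm (grad_map n gs p (rho / L) x)) ^ 2 +
          (favg n fs (step l1) + hval h (step l1) + rho * L / INR b * INR k * nsq (vsub (step l1) w) + Kc))).
      intros l1 Hl1.
      rewrite (avg_eq n Hn (k * b)%coq_nat _ (fun l2 => kap * (norm (grad_map n gs p (rho / L) x)) ^ 2 +
          (let r := inner_run n b gs p (rho / L) (step l1) w (gavg n gs w) (chunk b k l2) in
           kap * gsum n gs p (rho / L) (fst r) + C (snd r)))).
      2:{ intros l2 _. rewrite chunk_cons; auto. unfold step. simpl. unfold gsum, lsumR. simpl. ring. }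
      rewrite avg_plus avg_const; [|exact Hn]. apply Rplus_le_compat_l.
      apply IH; [lia|]. apply (prox_dom h (rho / L) p). exact Hp. }
    rewrite avg_plus avg_const; [|exact Hn].
    rewrite avg_plus (avg_const n Hn b Kc) norm_sq.
    pose proof (one_step n fs gs L h p m b rho Hn HL Hg Hl Hc Hp Hb Hm H0 H1 Hr x w (hval h x) k Hx ltac:(lia)) as OS.
    fold kap in OS. unfold step. lra.
Qed.
Lemma nsq_self {d} (x : Vec d) : nsq (vsub x x) = 0.
Proof. unfold nsq, dot. rewrite -(sumI_zero d). apply sumI_ext; intro; unfold vsub; ring. Qed.

Lemma outer_lemma {d} n (fs : nat -> Vec d -> R) gs L (h : Vec d -> option R) p m b rho Fstar :
  (0 < n)%coq_nat -> 0 < L ->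
  (forall i, (i < n)%coq_nat -> is_gradient (fs i) (gs i)) ->
  (forall i, (i < n)%coq_nat -> lipschitz_grad L (gs i)) ->
  convex_fn h -> is_prox h (rho / L) p ->
  (1 <= b)%coq_nat -> (1 <= m)%coq_nat -> 0 < rho -> rho < 1 / 2 ->
  4 * rho ^ 2 * (INR m) ^ 2 / INR b + rho <= 1 ->
  (forall z, h z = Some (hval h z) -> Fstar <= favg n fs z + hval h z) ->
  forall S' (xt : Vec d), h xt = Some (hval h xt) ->
  avg_draws n ((S' * m)%coq_nat * b)%coq_nat (fun l =>
    rho * (1 - 2 * rho) / (2 * L) *
    gsum n gs p (rho / L) (outer_run n b gs p (rho / L) xt (chunk m S' (chunk b (S' * m)%coq_nat l))))
  <= favg n fs xt + hval h xt - Fstar.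
Proof.
  intros Hn HL Hg Hl Hc Hp Hb Hm H0 H1 Hr HF S'.
  set kap := rho * (1 - 2 * rho) / (2 * L).
  induction S' as [|S' IH]; intros xt Hxt.
  - simpl. unfold gsum, lsumR; simpl. specialize (HF xt Hxt). lra.
  - change (S S' * m)%coq_nat with (m + S' * m)%coq_nat.
    rewrite Nat.mul_add_distr_r avg_app.
    set C := fun z => avg_draws n ((S' * m)%coq_nat * b)%coq_nat (fun l2 =>
      kap * gsum n gs p (rho / L) (outer_run n b gs p (rho / L) z (chunk m S' (chunk b (S' * m)%coq_nat l2)))).
    eapply Rle_trans.
    { apply (avg_le n Hn (m * b)%coq_nat _ (fun l1 =>
        let r := inner_run n b gs p (rho / L) xt xt (gavg n gs xt) (chunk b m l1) in
        kap * gsum n gs p (rho / L) (fst r) + C (snd r))).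
      intros l1 Hl1. right.
      rewrite (avg_eq n Hn _ _ (fun l2 =>
        kap * gsum n gs p (rho / L) (fst (inner_run n b gs p (rho / L) xt xt (gavg n gs xt) (chunk b m l1)))
        + kap * gsum n gs p (rho / L) (outer_run n b gs p (rho / L)
             (snd (inner_run n b gs p (rho / L) xt xt (gavg n gs xt) (chunk b m l1)))
             (chunk m S' (chunk b (S' * m)%coq_nat l2))))).
      2:{ intros l2 _. rewrite chunk_app; auto. rewrite chunk_cons; [|apply chunk_length].
          cbn [outer_run]. unfold gsum. rewrite lsumR_app. rewrite ?mulnE. ring. }
      rewrite avg_plus avg_const; [|exact Hn]. reflexivity. }
    pose proof (inner_lemma n fs gs L h p m b rho Hn HL Hg Hl Hc Hp Hb Hm H0 H1 Hr xt C (- Fstar)) as IL.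
    assert (HC : forall z, h z = Some (hval h z) -> C z <= favg n fs z + hval h z + - Fstar).
    { intros z Hz. unfold C. specialize (IH z Hz). fold kap in IH. lra. }
    specialize (IL HC m xt (le_n m) Hxt). rewrite nsq_self in IL. fold kap in IL. lra.
Qed.
Theorem theorem5
  (n d : nat) (Hn : (0 < n)%coq_nat) (Hd : (0 < d)%coq_nat)
  (L : R) (HL : 0 < L)
  (fs : nat -> Vec d -> R) (gs : nat -> Vec d -> Vec d)
  (Hgrad : forall i, (i < n)%coq_nat -> is_gradient (fs i) (gs i))
  (Hsmooth : forall i, (i < n)%coq_nat -> lipschitz_grad L (gs i))
  (h : Vec d -> option R)
  (Hproper : proper_fn h) (Hlsc : lsc_fn h) (Hconv : convex_fn h) (Hcl : closed_dom h)
  (xstar : Vec d) (hstar : R) (Hxstar : h xstar = Some hstar)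
  (Hopt : forall y v, h y = Some v -> favg n fs xstar + hstar <= favg n fs y + v)
  (m b T : nat) (Hb1 : (1 <= b)%coq_nat) (Hbn : (b <= n)%coq_nat) (Hm : (1 <= m)%coq_nat)
  (HT : (1 <= T)%coq_nat) (HTm : exists k, T = (k * m)%coq_nat)
  (rho : R) (Hrho0 : 0 < rho) (Hrho1 : rho < 1 / 2)
  (Hrho : 4 * rho ^ 2 * (INR m) ^ 2 / INR b + rho <= 1)
  (p : Vec d -> Vec d) (Hp : is_prox h (rho / L) p)
  (x0 : Vec d) (h0 : R) (Hx0 : h x0 = Some h0) :
  expected_sq_gradmap n b m T gs p (rho / L) x0
  <= 2 * L * ((favg n fs x0 + h0) - (favg n fs xstar + hstar))
     / (rho * (1 - 2 * rho) * INR T).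
Proof.
  destruct HTm as [k Hk]. rewrite ?mulnE in Hk.
  assert (Hne : num_epochs T m = k).
  { unfold num_epochs. rewrite addnE subnE.
    replace (Init.Nat.sub (Init.Nat.add T m) 1) with (Init.Nat.add (Init.Nat.mul k m) (Init.Nat.sub m 1)) by lia.
    rewrite Nat.div_add_l; [|lia]. rewrite Nat.div_small; lia. }
  unfold expected_sq_gradmap. rewrite Hne. rewrite !mulnE.
  set kap := rho * (1 - 2 * rho) / (2 * L).
  assert (Hkap : 0 < kap).
  { unfold kap. apply Rdiv_lt_0_compat; [|lra]. apply Rmult_lt_0_compat; lra. }
  assert (HT' : 0 < INR T) by (apply lt_0_INR; lia).
  rewrite -Hk.
  rewrite (avg_eq n Hn _ _ (fun l => / (INR T * kap) *
     (kap * gsum n gs p (rho / L) (outer_run n b gs p (rho / L) x0 (chunk m k (chunk b (k * m)%coq_nat l)))))).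
  2:{ intros l _. rewrite -Hk. unfold gsum, lsumR. field. split; lra. }
  rewrite avg_scal.
  set Fstar := favg n fs xstar + hstar.
  assert (HF : forall z, h z = Some (hval h z) -> Fstar <= favg n fs z + hval h z).
  { intros z Hz. apply Hopt. exact Hz. }
  assert (Hx0' : h x0 = Some (hval h x0)) by (unfold hval; rewrite Hx0; reflexivity).
  pose proof (outer_lemma n fs gs L h p m b rho Fstar Hn HL Hgrad Hsmooth Hconv Hp Hb1 Hm Hrho0 Hrho1 Hrho HF k x0 Hx0') as OL.
  rewrite -Hk in OL. rewrite -?Hk. fold kap in OL.
  assert (Eh : hval h x0 = h0) by (unfold hval; rewrite Hx0; reflexivity).
  rewrite Eh in OL.
  assert (Hpos : 0 < / (INR T * kap)) by (apply Rinv_0_lt_compat; nra).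
  apply (Rmult_le_compat_l (/ (INR T * kap))) in OL; [|lra].
  eapply Rle_trans; [exact OL|]. right. unfold kap. field. repeat split; lra.
Qed.
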